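(* (Compactness and countable models.) Let $A$ be a branch such that every finite subset of $A$ is satisfiable. Then $A$ has a model $\mathcal{I}$ such that $\mathcal{I}\sigma$ is countable for every type $\sigma$.
   Context: Types: a countable set of base types including a distinguished $o$; other base types are sorts. Types: base types and $\sigma\tau$ (functions from $\sigma$ to $\tau$; $\sigma\tau\mu=\sigma(\tau\mu)$). Countably many names, each with a unique type, infinitely many of each type. Terms: names; $st:\mu$ for $s:\tau\mu,t:\tau$; $\lambda x.t:\sigma\tau$ for a name $x:\sigma$, $t:\tau$. Logical constants: $\neg:oo$, $=_\sigma:\sigma\sigma o$; other names are variables. Formulas: terms of type $o$. Semantics: a frame $\mathcal{D}$ maps types to nonempty sets with $\mathcal{D}(\sigma\tau)\subseteq(\mathcal{D}\sigma\to\mathcal{D}\tau)$. An assignment $\mathcal{I}$ into $\mathcal{D}$ extends $\mathcal{D}$ and maps names $x:\sigma$ into $\mathcal{D}\sigma$; $\mathcal{I}^x_a$ is the update. Partial evaluation: $\hat{\mathcal{I}}x=\mathcal{I}x$; $\hat{\mathcal{I}}(st)=(\hat{\mathcal{I}}s)(\hat{\mathcal{I}}t)$ when defined; $\hat{\mathcal{I}}(\lambda x.s)=f$ if $\lambda x.s:\sigma\tau$, $f\in\mathcal{D}(\sigma\tau)$ and $\widehat{\mathcal{I}^x_a}s=fa$ for all $a\in\mathcal{D}\sigma$. Interpretation: assignment with total evaluation. Logical: $\mathcal{I}o=\{0,1\}$, $\mathcal{I}(\neg)$ negation, $\mathcal{I}(=_\sigma)$ identity on $\mathcal{I}\sigma$.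 A model of a set of formulas is a logical interpretation evaluating each to $1$; satisfiable = has a model. Normalization: fixed type-preserving total $[\cdot]$; $s$ normal iff $[s]=s$; (N1) $[[s]]=[s]$; (N2) $[[s]t]=[st]$; (N3) $[xs_1\dots s_n]=x[s_1]\dots[s_n]$ for a name $x$, $n\ge0$, $xs_1\dots s_n$ of base type; (N4) $\hat{\mathcal{I}}[s]=\hat{\mathcal{I}}s$ for every interpretation. Substitutions: type-preserving partial functions $\theta$ from names to terms ($\theta^x_s$ update), each extending to a type-preserving total $\hat\theta$ with (S1) $\hat\theta x=\theta x$ if $x\in\mathrm{Dom}\theta$, else $x$; (S2) $\hat\theta(st)=(\hat\theta s)(\hat\theta t)$; (S3) $[(\hat\theta(\lambda x.s))t]=[\widehat{\theta^x_t}s]$; (S4) $[\hat\emptyset s]=[s]$. A branch is a set of normal formulas. *)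

(* Defs.v *)
From mathcomp Require Import ssreflect ssrfun ssrbool eqtype choice.
From Stdlib Require Import List.
Set Implicit Arguments.
Unset Strict Implicit.

Section STT.
Variable S : countType.

(* Types: o, sorts, and function types  Arr s t  (written  s t  in the paper). *)
Inductive ty : Type := Bo | Bs (s : S) | Arr (a b : ty).

Definition ty_eq_dec (a b : ty) : {a = b} + {a <> b}.
Proof. decide equality. exact: eq_comparable. Defined.

Inductive name : Type := Neg | Eqc (a : ty) | Var (a : ty) (n : nat).

Definition name_eq_dec (x y : name) : {x = y} + {x <> y}.
Proof. decide equality; first [exact: ty_eq_dec | exact: PeanoNat.Nat.eq_dec]. Defined.

Definition nty (x : name) : ty :=
  match x with
  | Neg => Arr Bo Bo
  | Eqc a => Arr a (Arr a Bo)
  | Var a _ => a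
  end.

Inductive tm : ty -> Type :=
| Nm (x : name) : tm (nty x)
| App (a b : ty) : tm (Arr a b) -> tm a -> tm b
| Lam (x : name) (b : ty) : tm b -> tm (Arr (nty x) b).

(* Frames: nonempty domains, with D(a b) a set of functions D a -> D b
   (represented by an extensional application map). *)
Record frame := Frame {
  dom : ty -> Type;
  app : forall a b, dom (Arr a b) -> dom a -> dom b;
  app_ext : forall a b (f g : dom (Arr a b)), (forall v, app f v = app g v) -> f = g;
  dom_ne : forall a, inhabited (dom a)
}.

Definition assignment (D : frame) := forall x : name, dom D (nty x).

Definition upd (D : frame) (I : assignment D) (x : name) (v : dom D (nty x))
  : assignment D :=
  fun y => match name_eq_dec x y with
           | left e => eq_rect x (fun z => dom D (nty z)) v y e
           | right _ => I y
           end.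

(* Partial evaluation, as a (functional) relation. *)
Inductive ev (D : frame) : assignment D -> forall a, tm a -> dom D a -> Prop :=
| ev_nm (I : assignment D) (x : name) : ev I (Nm x) (I x)
| ev_app (I : assignment D) a b (s : tm (Arr a b)) (t : tm a) f v :
    ev I s f -> ev I t v -> ev I (App s t) (@app D a b f v)
| ev_lam (I : assignment D) (x : name) b (s : tm b) (f : dom D (Arr (nty x) b)) :
    (forall v, ev (@upd D I x v) s (@app D _ _ f v)) -> ev I (Lam x s) f.

Definition interpretation (D : frame) (I : assignment D) : Prop :=
  forall a (t : tm a), exists v, ev I t v.

(* Logical: D o = {0,1} (via the bijection tv), neg is negation, Eqc a is identity. *)
Definition logical (D : frame) (I : assignment D) (tv : dom D Bo -> bool) : Prop :=
  bijective tv /\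
  (forall v, tv (@app D Bo Bo (I Neg) v) = negb (tv v)) /\
  (forall a (u w : dom D a),
      tv (@app D a Bo (@app D a (Arr a Bo) (I (Eqc a)) u) w) = true <-> u = w).

Definition is_model (D : frame) (I : assignment D) (A : tm Bo -> Prop) : Prop :=
  interpretation I /\
  exists tv, logical I tv /\ (forall s, A s -> forall v, ev I s v -> tv v = true).

Definition satisfiable (A : tm Bo -> Prop) : Prop :=
  exists (D : frame) (I : assignment D), is_model I A.

Definition is_base (a : ty) : Prop :=
  match a with Arr _ _ => False | _ => True end.

Fixpoint head_is_name a (t : tm a) : Prop :=
  match t with
  | Nm _ => True
  | App _ _ s _ => head_is_name s
  | Lam _ _ _ => False
  end.

Fixpoint normargs (nf : forall a, tm a -> tm a) a (t : tm a) : tm a :=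
  match t in tm a0 return tm a0 with
  | Nm x => Nm x
  | App a0 b0 s u => App (normargs nf s) (nf a0 u)
  | Lam x b s => Lam x s
  end.

Definition normalization (nf : forall a, tm a -> tm a) : Prop :=
  (forall a (s : tm a), nf a (nf a s) = nf a s) /\
  (forall a b (s : tm (Arr a b)) (t : tm a),
      nf b (App (nf _ s) t) = nf b (App s t)) /\
  (forall a (t : tm a), is_base a -> head_is_name t -> nf a t = normargs nf t) /\
  (forall (D : frame) (I : assignment D), interpretation I ->
     forall a (s : tm a) (v : dom D a), ev I (nf a s) v <-> ev I s v).

Definition subst := forall x : name, option (tm (nty x)).

Definition subst_empty : subst := fun _ => None.

Definition supd (th : subst) (x : name) (t : tm (nty x)) : subst :=
  fun y => match name_eq_dec x y with
           | left e => Some (eq_rect x (fun z => tm (nty z)) t y e)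
           | right _ => th y
           end.

Definition hat_spec (nf : forall a, tm a -> tm a)
    (hat : subst -> forall a, tm a -> tm a) : Prop :=
  (forall th x, hat th _ (Nm x) =
     match th x with Some t => t | None => Nm x end) /\
  (forall th a b (s : tm (Arr a b)) (t : tm a),
     hat th b (App s t) = App (hat th _ s) (hat th a t)) /\
  (forall th x b (s : tm b) (t : tm (nty x)),
     nf b (App (hat th _ (Lam x s)) t) = nf b (hat (@supd th x t) b s)) /\
  (forall a (s : tm a), nf a (hat subst_empty a s) = nf a s).

Definition branch (nf : forall a, tm a -> tm a) (A : tm Bo -> Prop) : Prop :=
  forall s, A s -> nf Bo s = s.

Definition countable_type (T : Type) : Prop :=
  exists f : T -> nat, injective f.

End STT.

(* Main.v *)
Require Import Defs.
From mathcomp Require Import ssreflect ssrfun ssrbool eqtype choice.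
From Stdlib Require Import List Lia ClassicalEpsilon FunctionalExtensionality ProofIrrelevance PropExtensionality Eqdep_dec Arith.
Set Implicit Arguments.
Unset Strict Implicit.

Section Sem.
Variable S : countType.

Definition evinv (D : frame S) (I : assignment D) a (t : tm a) : dom D a -> Prop :=
  match t in tm a return dom D a -> Prop with
  | Nm x => fun w => w = I x
  | App a b s u => fun w => exists f v, ev I s f /\ ev I u v /\ w = Defs.app f v
  | Lam x b s => fun f => forall v, ev (@upd _ _ I x v) s (Defs.app f v)
  end.

Lemma ev_inv (D : frame S) (I : assignment D) a (t : tm a) w : ev I t w -> evinv I t w.
Proof. case=> //= {}I a0 b s u f v Hs Hu; by exists f, v. Qed.

Lemma ev_fun (D : frame S) (I : assignment D) a (t : tm a) v :
  ev I t v -> forall w, ev I t w -> v = w.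
Proof.
elim=> {I a t v}.
- by move=> I x w /ev_inv.
- move=> I a b s t f v _ IHs _ IHt w /ev_inv [f' [v' [Hs [Ht ->]]]].
  by rewrite (IHs _ Hs) (IHt _ Ht).
- move=> I x b s f _ IH w /ev_inv H. apply: app_ext => v. exact: IH.
Qed.

Lemma upd_same (D : frame S) (I : assignment D) x v : @upd _ D I x v x = v.
Proof.
rewrite /upd; case: (name_eq_dec x x) => [e|//].
by rewrite (UIP_dec (@name_eq_dec S) e erefl).
Qed.

Lemma upd_other (D : frame S) (I : assignment D) x v y : x <> y -> @upd _ D I x v y = I y.
Proof. by rewrite /upd; case: (name_eq_dec x y). Qed.

Fixpoint vars a (t : tm a) : list (name S) :=
  match t with
  | Nm x => x :: nil
  | App _ _ s u => vars s ++ vars u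
  | Lam x _ s => x :: vars s
  end.

Definition agree (D : frame S) (I J : assignment D) (l : list (name S)) :=
  forall y, In y l -> I y = J y.

Lemma coinc (D : frame S) a (t : tm a) : forall (I J : assignment D) w,
  agree I J (vars t) -> ev I t w -> ev J t w.
Proof.
elim: t => [x|a0 b s IHs u IHu|x b s IHs] I J w Hag /ev_inv /=.
- move=> ->; rewrite (Hag x) /=; [exact: ev_nm | by left].
- move=> [f [v [Hs [Hu ->]]]]; apply: ev_app.
  + apply: IHs Hs => y Hy; apply: Hag; apply: in_or_app; by left.
  + apply: IHu Hu => y Hy; apply: Hag; apply: in_or_app; by right.
- move=> H; apply: ev_lam => v; apply: IHs (H v) => y Hy.
  case: (name_eq_dec x y) => [<-|ne]; first by rewrite !upd_same.
  rewrite !(upd_other _ _ ne); apply: Hag; by right.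
Qed.

Lemma interp_upd (D : frame S) (I : assignment D) x v :
  interpretation I -> interpretation (@upd _ _ I x v).
Proof.
move=> HI a t; have [f Hf] := HI _ (Lam x t).
exists (Defs.app f v); exact: (ev_inv Hf v).
Qed.

Definition upds (D : frame S) (I J : assignment D) (l : list (name S)) : assignment D :=
  fold_right (fun y K => @upd _ _ K y (J y)) I l.

Lemma upds_agree (D : frame S) (I J : assignment D) l : agree (upds I J l) J l.
Proof.
elim: l => [|y l IH] z //= [<-|Hz]; first by rewrite upd_same.
case: (name_eq_dec y z) => [<-|ne]; first by rewrite upd_same.
rewrite (upd_other _ _ ne); exact: IH.
Qed.

Lemma upds_interp (D : frame S) (I J : assignment D) l :
  interpretation I -> interpretation (upds I J l).
Proof. move=> HI; elim: l => [|y l IH] //=; exact: interp_upd. Qed.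

Lemma interp_all (D : frame S) (I J : assignment D) :
  interpretation I -> interpretation J.
Proof.
move=> HI a t; have [w Hw] := upds_interp J (vars t) HI t.
exists w; apply: coinc Hw; exact: upds_agree.
Qed.

Definition neg (s : tm (Bo S)) : tm (Bo S) := @App S (Bo S) (Bo S) (Nm (Neg S)) s.
Definition eqt a (s t : tm a) : tm (Bo S) :=
  @App S a (Bo S) (@App S a (Arr a (Bo S)) (Nm (Eqc a)) s) t.

Definition holds (D : frame S) (I : assignment D) (tv : dom D (Bo S) -> bool) (s : tm (Bo S)) :=
  forall w, ev I s w -> tv w = true.

Lemma holds_neg (D : frame S) (I : assignment D) tv s :
  interpretation I -> logical I tv -> (holds I tv (neg s) <-> ~ holds I tv s).
Proof.
move=> HI [_ [Hn _]]; have [w Hw] := HI _ s.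
have Hnw : ev I (neg s) (Defs.app (I (Neg S)) w) by apply: ev_app => //; exact (ev_nm I (Neg S)).
split.
- move=> H H2; have := H _ Hnw; rewrite Hn (H2 _ Hw) //.
- move=> H v Hv; rewrite -(ev_fun Hnw Hv) Hn.
  case E: (tv w) => //; exfalso; apply: H => v' Hv'; by rewrite -(ev_fun Hw Hv').
Qed.

Lemma holds_eqt (D : frame S) (I : assignment D) tv a (s t : tm a) u v :
  logical I tv -> ev I s u -> ev I t v -> (holds I tv (eqt s t) <-> u = v).
Proof.
move=> [_ [_ He]] Hs Ht.
have Hw : ev I (eqt s t) (Defs.app (Defs.app (I (Eqc a)) u) v).
  by apply: ev_app => //; apply: ev_app => //; exact (ev_nm I (Eqc a)).
split.
- move=> H; apply/He; exact: H.
- move=> Huv w Hw'; rewrite -(ev_fun Hw Hw'); exact/He.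
Qed.

Definition sat (l : list (tm (Bo S))) := satisfiable (fun s => In s l).
Definition FS (P : tm (Bo S) -> Prop) := forall l, (forall s, In s l -> P s) -> sat l.


Fixpoint ty2tr (a : ty S) : GenTree.tree S :=
  match a with
  | Bo => GenTree.Node 0 nil
  | Bs s => GenTree.Leaf s
  | Arr a b => GenTree.Node 1 (ty2tr a :: ty2tr b :: nil)
  end.

Lemma ty2tr_inj : injective ty2tr.
Proof.
elim=> [|s|a IHa b IHb] [|s'|a' b'] //= H; try discriminate.
- by case: H => ->.
- case: H => /IHa -> /IHb -> //.
Qed.

Definition nm2tr (x : name S) : GenTree.tree S :=
  match x with
  | Neg => GenTree.Node 0 nil
  | Eqc a => GenTree.Node 1 (ty2tr a :: nil)
  | Var a n => GenTree.Node 2 (ty2tr a :: GenTree.Node n nil :: nil)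
  end.

Lemma nm2tr_inj : injective nm2tr.
Proof.
case=> [|a|a n] [|a'|a' n'] //= H; try discriminate.
- by case: H => /ty2tr_inj ->.
- by case: H => /ty2tr_inj -> ->.
Qed.

Fixpoint tm2tr a (t : tm a) : GenTree.tree S :=
  match t with
  | Nm x => GenTree.Node 0 (nm2tr x :: nil)
  | App _ _ s u => GenTree.Node 1 (tm2tr s :: tm2tr u :: nil)
  | Lam x _ s => GenTree.Node 2 (nm2tr x :: tm2tr s :: nil)
  end.

Lemma tm2tr_inj a (s : tm a) : forall b (t : tm b),
  tm2tr s = tm2tr t -> existT (@tm S) a s = existT (@tm S) b t.
Proof.
elim: s => [x|a0 b0 s IHs u IHu|x b0 s IHs] b [y|a1 b1 t u'|y b1 t] //= H;
  try discriminate.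
- by case: H => /nm2tr_inj ->.
- case: H => H1 H2.
  have e1 := IHs _ _ H1; have e2 := IHu _ _ H2.
  have := f_equal (@projT1 _ _) e1 => /= [[ea eb]]; subst.
  apply inj_pair2_eq_dec in e1; last exact: (@ty_eq_dec S).
  apply inj_pair2_eq_dec in e2; last exact: (@ty_eq_dec S).
  by subst.
- case: H => /nm2tr_inj ex H2; subst.
  have e1 := IHs _ _ H2.
  have := f_equal (@projT1 _ _) e1 => /= eb; subst.
  apply inj_pair2_eq_dec in e1; last exact: (@ty_eq_dec S).
  by subst.
Qed.

Lemma tm2tr_inj1 a (s t : tm a) : tm2tr s = tm2tr t -> s = t.
Proof.
move=> /tm2tr_inj e; apply inj_pair2_eq_dec in e => //; exact: (@ty_eq_dec S).
Qed.

Definition rnm (x : name S) : tm (nty x) :=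
  match x return tm (nty x) with
  | Neg => Nm (Neg S) | Eqc a => Nm (Eqc a) | Var a n => Nm (Var a (2*n)) end.
Definition rlam (x : name S) b (s : tm b) : tm (Arr (nty x) b) :=
  match x return tm (Arr (nty x) b) with
  | Neg => Lam (Neg S) s | Eqc a => Lam (Eqc a) s | Var a n => Lam (Var a (2*n)) s end.
Fixpoint ren a (t : tm a) : tm a :=
  match t with
  | Nm x => rnm x
  | App _ _ s u => App (ren s) (ren u)
  | Lam x _ s => rlam x (ren s)
  end.
Definition comp (D : frame S) (I : assignment D) : assignment D :=
  fun x => match x return dom D (nty x) with
  | Neg => I (Neg S) | Eqc a => I (Eqc a) | Var a n => I (Var a (2*n)) end.

Ltac comp_upd_tac :=
  apply: functional_extensionality_dep; let y := fresh "y" in intro y;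
  match goal with |- _ = @upd _ _ _ ?x _ _ =>
  let ne := fresh "ne" in
  destruct (name_eq_dec x y) as [<-|ne];
  [ rewrite /comp /= !upd_same //
  | rewrite (upd_other _ _ ne); destruct y; simpl;
    rewrite upd_other //; let e := fresh "e" in intro e; apply: ne; injection e; intros; subst;
    try f_equal; lia ] end.

Lemma ren_ev a (t : tm a) : forall (D : frame S) (I : assignment D) w,
  ev I (ren t) w <-> ev (comp I) t w.
Proof.
elim: t => [x|a0 b s IHs u IHu|x b s IHs] D I w.
- move: w; case: x => [|a1|a1 n] w /=; split=> /ev_inv /= ->.
  + exact (ev_nm (comp I) (Neg S)).
  + exact (ev_nm I (Neg S)).
  + exact (ev_nm (comp I) (Eqc a1)).
  + exact (ev_nm I (Eqc a1)).
  + exact (ev_nm (comp I) (Var a1 n)).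
  + exact (ev_nm I (Var a1 (2*n))).
- rewrite /=; split=> /ev_inv [f [v [Hs [Hu ->]]]] /=; apply: ev_app.
  + exact (proj1 (IHs D I f) Hs).
  + exact (proj1 (IHu D I v) Hu).
  + exact (proj2 (IHs D I f) Hs).
  + exact (proj2 (IHu D I v) Hu).
- move: w; case: x s IHs => [|a1|a1 n] s IHs w /=; split=> /ev_inv /= H; match goal with |- ev _ (Lam ?x _) _ => apply (@ev_lam _ _ _ x) end => v.
  + have EQ : comp (@upd _ _ I (Neg S) v) = @upd _ _ (comp I) (Neg S) v by comp_upd_tac.
    rewrite -EQ; exact (proj1 (IHs _ _ _) (H v)).
  + have EQ : comp (@upd _ _ I (Neg S) v) = @upd _ _ (comp I) (Neg S) v by comp_upd_tac.
    apply (proj2 (IHs _ _ _)); rewrite EQ; exact (H v).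
  + have EQ : comp (@upd _ _ I (Eqc a1) v) = @upd _ _ (comp I) (Eqc a1) v by comp_upd_tac.
    rewrite -EQ; exact (proj1 (IHs _ _ _) (H v)).
  + have EQ : comp (@upd _ _ I (Eqc a1) v) = @upd _ _ (comp I) (Eqc a1) v by comp_upd_tac.
    apply (proj2 (IHs _ _ _)); rewrite EQ; exact (H v).
  + have EQ : comp (@upd _ _ I (Var a1 (2*n)) v) = @upd _ _ (comp I) (Var a1 n) v by comp_upd_tac.
    rewrite -EQ; exact (proj1 (IHs _ _ _) (H v)).
  + have EQ : comp (@upd _ _ I (Var a1 (2*n)) v) = @upd _ _ (comp I) (Var a1 n) v by comp_upd_tac.
    apply (proj2 (IHs _ _ _)); rewrite EQ; exact (H v).
Qed.


Definition maxidx (l : list (name S)) : nat :=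
  fold_right (fun y m => match y with Var _ n => Nat.max n m | _ => m end) 0 l.

Lemma maxidx_in l b n : In (Var b n) l -> n <= maxidx l.
Proof.
elim: l => [//|y l IH] /= [->|H] /=; first lia.
case: y => [|c|c k]; have := IH H; lia.
Qed.

Lemma ren_even a (t : tm a) b n : In (Var b n) (vars (ren t)) -> exists m, n = 2*m.
Proof.
elim: t => [x|a0 b0 s IHs u IHu|x b0 s IHs] /=.
- case: x => [|c|c k] /= [e|//]; try discriminate.
  inversion e; by exists k.
- move=> H; case: (in_app_or _ _ _ H); [exact: IHs | exact: IHu].
- case: x s IHs => [|c|c k] s IHs /= [e|/IHs //]; try discriminate.
  inversion e; by exists k.
Qed.

Definition addf (P : tm (Bo S) -> Prop) (p : tm (Bo S)) := fun s => P s \/ s = p.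

Lemma FS_sub (P Q : tm (Bo S) -> Prop) : (forall s, Q s -> P s) -> FS P -> FS Q.
Proof. move=> HQP HP l Hl; apply: HP => s /Hl; exact: HQP. Qed.

Lemma split_list (P : tm (Bo S) -> Prop) p l :
  (forall s, In s l -> P s \/ s = p) ->
  exists l', (forall s, In s l' -> P s) /\ forall s, In s l -> In s l' \/ s = p.
Proof.
elim: l => [|s l IH] H; first by exists nil.
have [l' [H1 H2]] := IH (fun s' Hs' => H s' (or_intror Hs')).
case: (H s (or_introl erefl)) => [Ps|->].
- exists (s :: l'); split.
  + by move=> s' /= [<-|/H1].
  + move=> s' /= [<-|/H2 [?|?]]; [left; left | left; right | right] => //.
- exists l'; split=> // s' /= [<-|/H2 //]; by right.
Qed.

Lemma FS_step (P : tm (Bo S) -> Prop) p :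
  FS P -> FS (addf P p) \/ FS (addf P (neg p)).
Proof.
move=> HP; case: (classic (FS (addf P p))) => [|H1]; [by left|right].
move=> l Hl.
have [l1 [Hl1 Hnot]] : exists l1, (forall s, In s l1 -> addf P p s) /\ ~ sat l1.
  apply: NNPP => Hc; apply: H1 => l1 Hl1; apply: NNPP => Hn; apply: Hc; by exists l1.
have [l1' [Hl1'P Hl1']] := split_list Hl1.
have [l2' [Hl2'P Hl2']] := split_list Hl.
have [D [I [HI [tv [Hlog Hh]]]]] : sat (l1' ++ l2').
  apply: HP => s Hs; case: (in_app_or _ _ _ Hs) => [/Hl1'P|/Hl2'P] //.
case: (classic (holds I tv p)) => Hp.
- exfalso; apply: Hnot; exists D, I; split=> //; exists tv; split=> // s /Hl1' [Hs|->] //.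
  apply: Hh; apply: in_or_app; by left.
- exists D, I; split=> //; exists tv; split=> // s /Hl2' [Hs|->].
  + apply: Hh; apply: in_or_app; by right.
  + exact/(holds_neg _ HI Hlog).
Qed.

Lemma logical_agree (D : frame S) (I J : assignment D) tv :
  J (Neg S) = I (Neg S) -> (forall a, J (Eqc a) = I (Eqc a)) ->
  logical I tv -> logical J tv.
Proof.
move=> HN HE [Hb [Hn He]]; split=> //; split.
- move=> v; rewrite HN; exact: Hn.
- move=> a u w; rewrite HE; exact: He.
Qed.

Lemma FS_wit (P : tm (Bo S) -> Prop) a b (f g : tm (Arr a b)) k :
  let c := Var a k in
  FS (addf P (neg (eqt f g))) ->
  (forall s, P s -> ~ In c (vars s)) -> ~ In c (vars f) -> ~ In c (vars g) ->
  FS (addf (addf P (neg (eqt f g)))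
       (neg (eqt (App f (Nm c : tm a)) (App g (Nm c : tm a))))).
Proof.
move=> c HP Pc fc gc l Hl.
have [l1 [Hl1 Hll1]] := split_list Hl.
have [D [I [HI [tv [Hlog Hh]]]]] := HP _ (fun s (H : In s (neg (eqt f g) :: l1)) =>
   match H with or_introl e => or_intror (esym e) | or_intror h => Hl1 s h end).
have [vf Hvf] := HI _ f; have [vg Hvg] := HI _ g.
have Hneq : vf <> vg.
  move=> e; have := Hh _ (or_introl erefl).
  move/(holds_neg _ HI Hlog); apply; exact/(holds_eqt Hlog Hvf Hvg).
have [v Hv] : exists v, Defs.app vf v <> Defs.app vg v.
  apply: NNPP => Hc; apply: Hneq; apply: app_ext => v; apply: NNPP => Hn; apply: Hc; by exists v.
pose J := @upd _ _ I c v.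
have HJ : interpretation J := interp_all J HI.
have HlogJ : logical J tv.
  apply: (logical_agree _ _ Hlog); first by rewrite /J upd_other.
  by move=> a0; rewrite /J upd_other.
have agr : forall a0 (t : tm a0), ~ In c (vars t) -> agree J I (vars t).
  move=> a0 t Ht y Hy; rewrite /J upd_other //; move=> e; apply: Ht; by rewrite e.
have Hfresh : forall s, In s (neg (eqt f g) :: l1) -> ~ In c (vars s).
  move=> s /= [<-|/Hl1 [/Pc //|->]].
  1,2: idtac.
  1,2: move: fc gc; rewrite /c /= ?in_app_iff /=; intuition discriminate.
exists D, J; split=> //; exists tv; split=> // s /Hll1 [Hs|->].
- move=> w Hw; apply: (Hh s (or_intror Hs)); apply: coinc Hw; apply: agr.
  apply: Hfresh; by right.
- have HfJ : ev J f vf by apply: coinc Hvf => y Hy; rewrite /J upd_other // => e; apply: fc; rewrite e.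
  have HgJ : ev J g vg by apply: coinc Hvg => y Hy; rewrite /J upd_other // => e; apply: gc; rewrite e.
  have HcJ : ev J (Nm c : tm a) v.
    have := ev_nm J c; by rewrite /J upd_same.
  apply/(holds_neg _ HJ HlogJ) => /(holds_eqt HlogJ (ev_app HfJ HcJ) (ev_app HgJ HcJ)).
  exact: Hv.
Qed.


Inductive task := TF (p : tm (Bo S)) | TW (a b : ty S) (f g : tm (Arr a b)).

Definition task2tr (t : task) : GenTree.tree S :=
  match t with
  | TF p => GenTree.Node 0 (tm2tr p :: nil)
  | TW _ _ f g => GenTree.Node 1 (tm2tr f :: tm2tr g :: nil)
  end.

Definition task_code (t : task) : nat := pickle (task2tr t).

Lemma task_code_inj : injective task_code.
Proof.
move=> t1 t2 /(pcan_inj pickleK_inv).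
case: t1 => [p|a b f g]; case: t2 => [p'|a' b' f' g'] //= H; try discriminate.
- by case: H => /tm2tr_inj1 ->.
- case: H => H1 H2.
  have e1 := tm2tr_inj H1; have e2 := tm2tr_inj H2.
  have := f_equal (@projT1 _ _) e1 => /= [[ea eb]]; subst.
  apply inj_pair2_eq_dec in e1; last exact: (@ty_eq_dec S).
  apply inj_pair2_eq_dec in e2; last exact: (@ty_eq_dec S).
  by subst.
Qed.

Definition task_of (n : nat) : option task :=
  match excluded_middle_informative (exists t, task_code t = n) with
  | left H => Some (proj1_sig (constructive_indefinite_description _ H))
  | right _ => None
  end.

Lemma task_of_code t : task_of (task_code t) = Some t.
Proof.
rewrite /task_of; case: excluded_middle_informative => [H|[]]; last by exists t.
case: constructive_indefinite_description => t' /= /task_code_inj -> //.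
Qed.

Variable A' : tm (Bo S) -> Prop.
Hypothesis HA'fs : FS A'.
Hypothesis HA'even : forall s, A' s -> forall b n, In (Var b n) (vars s) -> exists m, n = 2*m.

Definition PL (L : list (tm (Bo S))) := fun s => A' s \/ In s L.

Definition freshk a b (f g : tm (Arr a b)) (L : list (tm (Bo S))) : nat :=
  2 * maxidx (vars f ++ vars g ++ flat_map (@vars (Bo S)) L) + 1.

Definition wit a b (f g : tm (Arr a b)) k : tm (Bo S) :=
  neg (eqt (App f (Nm (Var a k) : tm a)) (App g (Nm (Var a k) : tm a))).

Definition step (L : list (tm (Bo S))) (t : task) : list (tm (Bo S)) :=
  match t with
  | TF p => if excluded_middle_informative (FS (addf (PL L) p)) then p :: L else neg p :: L
  | TW a b f g =>
      if excluded_middle_informative (FS (addf (PL L) (neg (eqt f g))))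
      then wit f g (freshk f g L) :: neg (eqt f g) :: L else L
  end.

Lemma step_incl L t s : In s L -> In s (step L t).
Proof.
case: t => [p|a b f g] /=; case: excluded_middle_informative => _ H //=; by right; try right.
Qed.

Lemma step_FS L t : FS (PL L) -> FS (PL (step L t)).
Proof.
move=> HL; case: t => [p|a b f g] /=; case: excluded_middle_informative => H /=.
- move: H; apply: FS_sub => s [Hs|[<-|Hs]]; [by left; left| by right| by left; right].
- have [//|H2] := FS_step p HL.
  move: H2; apply: FS_sub => s [Hs|[<-|Hs]]; [by left; left| by right| by left; right].
- set k := freshk f g L.
  have HW := @FS_wit (PL L) a b f g k H.
  have Mf : forall b0 n, In (Var b0 n) (vars f ++ vars g ++ flat_map (@vars (Bo S)) L) ->
      n <= maxidx (vars f ++ vars g ++ flat_map (@vars (Bo S)) L).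
    move=> b0 n; exact: maxidx_in.
  have F1 : forall s, PL L s -> ~ In (Var a k) (vars s).
    move=> s [/HA'even Hs|Hs] Hin.
    * have [m] := Hs _ _ Hin; rewrite /k /freshk; lia.
    * have : k <= maxidx (vars f ++ vars g ++ flat_map (@vars (Bo S)) L).
        apply: (Mf a); rewrite !in_app_iff; right; right; apply (proj2 (in_flat_map _ _ _)); exists s; by split.
      rewrite /k /freshk; lia.
  have F2 : ~ In (Var a k) (vars f).
    move=> Hin; have : k <= maxidx (vars f ++ vars g ++ flat_map (@vars (Bo S)) L).
      apply: (Mf a); rewrite !in_app_iff; by left.
    rewrite /k /freshk; lia.
  have F3 : ~ In (Var a k) (vars g).
    move=> Hin; have : k <= maxidx (vars f ++ vars g ++ flat_map (@vars (Bo S)) L).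
      apply: (Mf a); rewrite !in_app_iff; by right; left.
    rewrite /k /freshk; lia.
  have H2 := HW F1 F2 F3.
  move: H2; apply: FS_sub => s [Hs|[<-|[<-|Hs]]].
  * by left; left; left.
  * by right.
  * by left; right.
  * by left; left; right.
- exact HL.
Qed.

Definition Lst (n : nat) : list (tm (Bo S)) :=
  nat_rect (fun _ => list (tm (Bo S))) nil
    (fun m L => match task_of m with Some t => step L t | None => L end) n.

Lemma Lst_succ n : Lst (Datatypes.S n) =
  match task_of n with Some t => step (Lst n) t | None => Lst n end.
Proof. by []. Qed.

Lemma Lst_FS n : FS (PL (Lst n)).
Proof.
elim: n => [|n IH].
- apply: FS_sub HA'fs => s [//|[]].
- rewrite Lst_succ; case: (task_of n) => [t|//]; exact: step_FS.
Qed.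

Lemma Lst_mono n m s : n <= m -> In s (Lst n) -> In s (Lst m).
Proof.
elim: m => [|m IH] Hnm Hs.
- have e : n = 0 by lia. by subst.
- case: (Nat.eq_dec n (Datatypes.S m)) => [e|ne]; first by rewrite -e.
  rewrite Lst_succ; have := IH ltac:(lia) Hs.
  case: (task_of m) => [t|//]; exact: step_incl.
Qed.

Definition Hset (s : tm (Bo S)) := A' s \/ exists n, In s (Lst n).

Lemma Hset_FS : FS Hset.
Proof.
move=> l Hl.
have [N HN] : exists N, forall s, In s l -> PL (Lst N) s.
  elim: l Hl => [|s l IH] Hl; first by exists 0.
  have [N HN] := IH (fun s' h => Hl s' (or_intror h)).
  case: (Hl s (or_introl erefl)) => [Hs|[n Hn]].
  + exists N => s' /= [<-|/HN //]; by left.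
  + exists (Nat.max n N) => s' /= [<-|/HN [?|H]]; [right | by left | right].
    * apply: Lst_mono Hn; lia.
    * apply: Lst_mono H; lia.
exact (Lst_FS HN).
Qed.

Lemma Hset_max p : Hset p \/ Hset (neg p).
Proof.
have [n Hn] : exists n, task_of n = Some (TF p) by exists (task_code (TF p)); exact: task_of_code.
have : In p (Lst (Datatypes.S n)) \/ In (neg p) (Lst (Datatypes.S n)).
  rewrite Lst_succ Hn /=; case: excluded_middle_informative => H0 /=; [left|right]; by left.
case=> H; [left|right]; right; by exists (Datatypes.S n).
Qed.

Lemma Hset_wit a b (f g : tm (Arr a b)) : Hset (neg (eqt f g)) ->
  exists u : tm a, Hset (neg (eqt (App f u) (App g u))).
Proof.
move=> Hfg.
have [n Hn] : exists n, task_of n = Some (TW f g) by exists (task_code (TW f g)); exact: task_of_code.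
have HFS : FS (addf (PL (Lst n)) (neg (eqt f g))).
  apply: FS_sub Hset_FS => s [[Hs|Hs]|->] //; [by left | right; by exists n].
exists (Nm (Var a (freshk f g (Lst n)))); right; exists (Datatypes.S n).
rewrite Lst_succ Hn /=; case: excluded_middle_informative => H0 /=; [by left | by []].
Qed.

Lemma Hset_A s : A' s -> Hset s.
Proof. by left. Qed.

End Sem.

Section TermModel.
Variable S : countType.
Variable nf : forall a : ty S, tm a -> tm a.
Variable hat : subst S -> forall a : ty S, tm a -> tm a.
Hypothesis Hnf : normalization nf.
Hypothesis Hhat : hat_spec nf hat.
Variable H : tm (Bo S) -> Prop.
Hypothesis Hmax : forall p, H p \/ H (neg p).
Hypothesis Hfs : FS H.
Hypothesis Hwit : forall a b (f g : tm (Arr a b)), H (neg (eqt f g)) ->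
  exists u : tm a, H (neg (eqt (App f u) (App g u))).

Lemma Hclosed (l : list (tm (Bo S))) p :
  (forall s, In s l -> H s) ->
  (forall (D : frame S) (I : assignment D) tv, interpretation I -> logical I tv ->
     (forall s, In s l -> holds I tv s) -> holds I tv p) -> H p.
Proof.
move=> Hl Hsem; case: (Hmax p) => // Hn.
have [D [I [HI [tv [Hlog Hh]]]]] : sat (neg p :: l).
  apply: Hfs => s /= [<-|/Hl //]; done.
exfalso.
have Hp : holds I tv p by apply: Hsem => // s Hs; apply: Hh; right.
have := Hh _ (or_introl erefl); move/(holds_neg _ HI Hlog); exact.
Qed.

Lemma Hcons p : H p -> H (neg p) -> False.
Proof.
move=> H1 H2.
have [D [I [HI [tv [Hlog Hh]]]]] : sat (p :: neg p :: nil).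
  apply: Hfs => s /= [<-|[<-|[]]] //.
have := Hh _ (or_intror (or_introl erefl)); move/(holds_neg _ HI Hlog); apply.
apply: Hh; by left.
Qed.

Definition eqv a (s t : tm a) := H (eqt s t).

Lemma val_ex (D : frame S) (I : assignment D) a (t : tm a) :
  interpretation I -> exists v, ev I t v.
Proof. by move=> HI; apply: HI. Qed.

Lemma eqv_refl a (s : tm a) : eqv s s.
Proof.
apply: (@Hclosed nil) => // D I tv HI Hlog _.
have [v Hv] := val_ex s HI; exact/(holds_eqt Hlog Hv Hv).
Qed.

Lemma eqv_trans a (s t u : tm a) : eqv s t -> eqv t u -> eqv s u.
Proof.
move=> H1 H2; apply: (@Hclosed (eqt s t :: eqt t u :: nil)).
  by move=> x /= [<-|[<-|[]]].
move=> D I tv HI Hlog Hh.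
have [vs Hs] := val_ex s HI; have [vt Ht] := val_ex t HI; have [vu Hu] := val_ex u HI.
apply/(holds_eqt Hlog Hs Hu).
have e1 := proj1 (holds_eqt Hlog Hs Ht) (Hh _ (or_introl erefl)).
have e2 := proj1 (holds_eqt Hlog Ht Hu) (Hh _ (or_intror (or_introl erefl))).
by rewrite e1 e2.
Qed.

Lemma eqv_sym a (s t : tm a) : eqv s t -> eqv t s.
Proof.
move=> H1; apply: (@Hclosed (eqt s t :: nil)).
  by move=> x /= [<-|[]].
move=> D I tv HI Hlog Hh.
have [vs Hs] := val_ex s HI; have [vt Ht] := val_ex t HI.
apply/(holds_eqt Hlog Ht Hs).
by rewrite (proj1 (holds_eqt Hlog Hs Ht) (Hh _ (or_introl erefl))).
Qed.

Lemma eqv_app a b (f f' : tm (Arr a b)) (u u' : tm a) :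
  eqv f f' -> eqv u u' -> eqv (App f u) (App f' u').
Proof.
move=> H1 H2; apply: (@Hclosed (eqt f f' :: eqt u u' :: nil)).
  by move=> x /= [<-|[<-|[]]].
move=> D I tv HI Hlog Hh.
have [vf Hf] := val_ex f HI; have [vf' Hf'] := val_ex f' HI.
have [vu Hu] := val_ex u HI; have [vu' Hu'] := val_ex u' HI.
apply/(holds_eqt Hlog (ev_app Hf Hu) (ev_app Hf' Hu')).
rewrite (proj1 (holds_eqt Hlog Hf Hf') (Hh _ (or_introl erefl))).
by rewrite (proj1 (holds_eqt Hlog Hu Hu') (Hh _ (or_intror (or_introl erefl)))).
Qed.

Lemma H_resp (s t : tm (Bo S)) : eqv s t -> H s -> H t.
Proof.
move=> H1 H2; apply: (@Hclosed (eqt s t :: s :: nil)).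
  by move=> x /= [<-|[<-|[]]].
move=> D I tv HI Hlog Hh w Hw.
have [vs Hs] := val_ex s HI.
rewrite -(proj1 (holds_eqt Hlog Hs Hw) (Hh _ (or_introl erefl))).
exact: (Hh _ (or_intror (or_introl erefl))).
Qed.

Lemma eqv_nf a (s t : tm a) : @nf a s = @nf a t -> eqv s t.
Proof.
move=> e; apply: (@Hclosed nil) => // D I tv HI Hlog _.
have [v Hv] := val_ex s HI.
have Ht : ev I t v.
  have [_ [_ [_ N4]]] := Hnf.
  apply/(N4 _ _ HI); rewrite -e; exact/(N4 _ _ HI).
exact/(holds_eqt Hlog Hv Ht).
Qed.

Definition cls a := {P : tm a -> Prop | exists t, P = eqv t}.
Definition mk a (t : tm a) : cls a := exist _ (eqv t) (ex_intro _ t erefl).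

Lemma mk_eq a (s t : tm a) : mk s = mk t <-> eqv s t.
Proof.
split.
- move=> e; have := f_equal (@proj1_sig _ _) e => /= e'.
  rewrite e'; exact: eqv_refl.
- move=> e; rewrite /mk.
  have ee : eqv s = eqv t.
    apply: functional_extensionality => u; apply: propositional_extensionality.
    split=> h; [apply: eqv_trans (eqv_sym e) h | apply: eqv_trans e h].
  move: (ex_intro _ s _) (ex_intro _ t _); rewrite ee => p1 p2.
  by rewrite (proof_irrelevance _ p1 p2).
Qed.

Lemma cls_ind a (c : cls a) : exists t, c = mk t.
Proof.
case: c => P [t e]; exists t; subst P; rewrite /mk; f_equal; exact: proof_irrelevance.
Qed.

Definition rep a (c : cls a) : tm a :=
  proj1_sig (constructive_indefinite_description _ (proj2_sig c)).

Lemma mk_rep a (c : cls a) : mk (rep c) = c.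
Proof.
rewrite /rep; case: constructive_indefinite_description => t /= e.
case: c e => P Pp /= e; subst P; rewrite /mk; f_equal; exact: proof_irrelevance.
Qed.

Lemma rep_mk a (t : tm a) : eqv (rep (mk t)) t.
Proof. apply/mk_eq; exact: mk_rep. Qed.

Definition tapp a b (c : cls (Arr a b)) (d : cls a) : cls b := mk (App (rep c) (rep d)).

Lemma tapp_mk a b (f : tm (Arr a b)) (u : tm a) : tapp (mk f) (mk u) = mk (App f u).
Proof. apply/mk_eq; apply: eqv_app; exact: rep_mk. Qed.

Lemma tapp_ext a b (c c' : cls (Arr a b)) : (forall d, tapp c d = tapp c' d) -> c = c'.
Proof.
have [f ->] := cls_ind c; have [g ->] := cls_ind c'.
move=> Hd; apply/mk_eq; case: (Hmax (eqt f g)) => // Hn.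
have [u Hu] := Hwit Hn.
have := Hd (mk u); rewrite !tapp_mk => /mk_eq Hfg.
exfalso; exact: Hcons Hfg Hu.
Qed.

Lemma cls_ne a : inhabited (cls a).
Proof. exact: (inhabits (mk (Nm (Var a 0) : tm a))). Qed.

Definition TM : frame S := @Frame S cls tapp tapp_ext cls_ne.

Definition TI : assignment TM := fun x => mk (Nm x).

Definition Jt (th : subst S) : assignment TM :=
  fun y => mk (match th y with Some t => t | None => Nm y end).

Lemma Jt_supd th x (u : tm (nty x)) : Jt (supd th u) = @upd _ TM (Jt th) x (mk u).
Proof.
apply: functional_extensionality_dep => y.
case: (name_eq_dec x y) => [<-|ne].
- rewrite upd_same /Jt /supd; case: (name_eq_dec x x) => [e|//].
  by rewrite (UIP_dec (@name_eq_dec S) e erefl).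
- rewrite upd_other // /Jt /supd; by case: (name_eq_dec x y).
Qed.

Lemma subst_ev a (t : tm a) : forall th, ev (Jt th) t (mk (@hat th a t)).
Proof.
have [S1 [S2 [S3 S4]]] := Hhat.
elim: t => [x|a0 b s IHs u IHu|x b s IHs] th.
- rewrite S1; exact (ev_nm (Jt th) x).
- rewrite S2 -tapp_mk; exact: (ev_app (IHs th) (IHu th)).
- apply (@ev_lam _ _ _ x) => v.
  have [u ->] := cls_ind v.
  have -> : Defs.app (f0 := TM) (mk (@hat th _ (Lam x s))) (mk u) =
            mk (App (@hat th _ (Lam x s)) u) by exact: tapp_mk.
  rewrite -Jt_supd.
  have -> : mk (App (@hat th _ (Lam x s)) u) = mk (@hat (supd th u) b s).
    apply/mk_eq; apply: eqv_nf; exact: S3.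
  exact: IHs.
Qed.

Lemma TI_interp : interpretation TI.
Proof. move=> a t; exists (mk (@hat (@subst_empty S) a t)); exact: (subst_ev t (@subst_empty S)). Qed.

Lemma TI_val (s : tm (Bo S)) w : ev TI s w -> w = mk s.
Proof.
have [S1 [S2 [S3 S4]]] := Hhat.
move=> Hw; rewrite -(ev_fun (subst_ev s (@subst_empty S)) Hw).
apply/mk_eq; apply: eqv_nf; exact: S4.
Qed.

Definition ttv (c : cls (Bo S)) : bool :=
  if excluded_middle_informative (H (rep c)) then true else false.

Lemma ttv_mk (s : tm (Bo S)) : ttv (mk s) = true <-> H s.
Proof.
rewrite /ttv; case: excluded_middle_informative => h /=; split=> // h2.
- apply: H_resp h; exact: rep_mk.
- exfalso; apply: h; apply: H_resp h2; apply: eqv_sym; exact: rep_mk.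
Qed.

Lemma ttv_mkF (s : tm (Bo S)) : ~ H s -> ttv (mk s) = false.
Proof. move=> h; case E: (ttv (mk s)) => //; exfalso; apply: h; exact/ttv_mk. Qed.

Definition TT : tm (Bo S) := eqt (Nm (Var (Bo S) 0) : tm (Bo S)) (Nm (Var (Bo S) 0)).

Lemma holds_val (D : frame S) (I : assignment D) tv p w :
  ev I p w -> (holds I tv p <-> tv w = true).
Proof. move=> Hw; split; [by apply | move=> h w' Hw'; by rewrite -(ev_fun Hw Hw')]. Qed.

Lemma TT_holds (D : frame S) (I : assignment D) tv :
  interpretation I -> logical I tv -> holds I tv TT.
Proof.
move=> HI Hlog; have [vx Hx] := val_ex (Nm (Var (Bo S) 0) : tm (Bo S)) HI.
exact/(holds_eqt Hlog Hx Hx).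
Qed.

Lemma TI_logical : logical TI ttv.
Proof.
have HT : H TT by exact: eqv_refl.
have HnT : ~ H (neg TT) by move=> h; exact: Hcons HT h.
split; [|split].
- exists (fun b : bool => if b then mk TT else mk (neg TT)).
  + move=> c; have [s ->] := cls_ind c.
    case: (Hmax s) => hs.
    * rewrite (proj2 (ttv_mk s) hs); apply/mk_eq.
      apply: (@Hclosed (s :: nil)) => [x /= [<-|[]] //|D I tv HI Hlog Hh].
      have [vT HvT] := val_ex TT HI; have [vs Hvs] := val_ex s HI.
      apply/(holds_eqt Hlog HvT Hvs).
      have [[g tvK gK] _] := Hlog.
      apply: (can_inj tvK).
      rewrite (Hh _ (or_introl erefl) _ Hvs).
      exact: (TT_holds HI Hlog).
    * have hs' : ~ H s by move=> h; exact: Hcons h hs.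
      rewrite (ttv_mkF hs'); apply/mk_eq.
      apply: (@Hclosed (neg s :: nil)) => [x /= [<-|[]] //|D I tv HI Hlog Hh].
      have [vT HvT] := val_ex (neg TT) HI; have [vs Hvs] := val_ex s HI.
      apply/(holds_eqt Hlog HvT Hvs).
      have [[g tvK gK] _] := Hlog.
      apply: (can_inj tvK).
      have h1 : ~ holds I tv (neg TT).
        move/(holds_neg _ HI Hlog); apply; exact: (TT_holds HI Hlog).
      have h2 : ~ holds I tv s.
        apply/(holds_neg _ HI Hlog); exact: (Hh _ (or_introl erefl)).
      move: h1 h2; rewrite (holds_val _ HvT) (holds_val _ Hvs).
      case: (tv vT); case: (tv vs) => //.
  + by case; [exact/ttv_mk | exact: ttv_mkF].
- move=> c; have [s ->] := cls_ind c.
  change (ttv (tapp (mk (Nm (Neg S))) (mk s)) = ~~ ttv (mk s)).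
  rewrite tapp_mk.
  case: (Hmax s) => hs.
  + rewrite (proj2 (ttv_mk s) hs) ttv_mkF //; move=> h; exact: Hcons hs h.
  + have hs' : ~ H s by move=> h; exact: Hcons h hs.
    rewrite (ttv_mkF hs'); exact/ttv_mk.
- move=> a u w; have [s ->] := cls_ind u; have [t ->] := cls_ind w.
  change (ttv (tapp (tapp (mk (Nm (Eqc a))) (mk s)) (mk t)) = true <-> mk s = mk t).
  rewrite (tapp_mk (Nm (Eqc a) : tm (Arr a (Arr a (Bo S)))) s) tapp_mk ttv_mk mk_eq. exact: iff_refl.
Qed.

Lemma cls_countable a : countable_type (cls a).
Proof.
exists (fun c => pickle (tm2tr (rep c))) => c d /(pcan_inj pickleK_inv) /tm2tr_inj1 e.
by rewrite -(mk_rep c) -(mk_rep d) e.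
Qed.

Lemma TI_holds s : H s -> holds TI ttv s.
Proof. move=> hs w /TI_val ->; exact/ttv_mk. Qed.

End TermModel.

Theorem theorem10p3 (S : countType)
  (nf : forall a : ty S, tm a -> tm a) (hat : subst S -> forall a : ty S, tm a -> tm a)
  (Hnf : normalization nf) (Hhat : hat_spec nf hat)
  (A : tm (@Bo S) -> Prop) (HA : branch nf A)
  (Hfin : forall l : list (tm (@Bo S)), (forall s, In s l -> A s) ->
            satisfiable (fun s => In s l)) :
  exists (D : frame S) (I : assignment D),
    is_model I A /\ forall a : ty S, countable_type (dom D a).
Proof.
pose A' := fun s => exists s0, A s0 /\ s = ren s0.
have HA'fs : FS A'.
  move=> l Hl.
  have [l0 [Hl0 Hll0]] : exists l0, (forall s, In s l0 -> A s) /\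
      forall s, In s l -> exists s0, In s0 l0 /\ s = ren s0.
    elim: l Hl => [|s l IH] Hl; first by exists nil.
    have [l0 [H1 H2]] := IH (fun s' h => Hl s' (or_intror h)).
    have [s0 [As0 e]] := Hl s (or_introl erefl).
    exists (s0 :: l0); split; first by move=> x /= [<-|/H1].
    move=> x /= [<-|/H2 [y [Hy ->]]].
    - exists s0; split=> //; by left.
    - exists y; split=> //; by right.
  have [D [I [HI [tv [Hlog Hh]]]]] := Hfin l0 Hl0.
  pose I' : assignment D := fun x => match x return dom D (nty x) with
    | Neg => I (Neg S) | Eqc a => I (Eqc a) | Var a m => I (Var a (Nat.div2 m)) end.
  have EI : comp I' = I.
    apply: functional_extensionality_dep => y; case: y => //= a m.
    by rewrite Nat.div2_double.
  exists D, I'; split; first exact: (interp_all I' HI).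
  exists tv; split; first exact: (logical_agree _ _ Hlog).
  move=> s /Hll0 [s0 [Hs0 ->]] w Hw.
  have := proj1 (ren_ev s0 I' w) Hw; rewrite EI; exact: Hh.
have HA'even : forall s, A' s -> forall b n, In (Var b n) (vars s) -> exists m, n = 2*m.
  move=> s [s0 [_ ->]] b n; exact: ren_even.
have Hmax := Hset_max A'.
have Hfs := Hset_FS HA'fs HA'even.
have Hwit := Hset_wit HA'fs HA'even.
exists (TM Hmax Hfs Hwit), (comp (TI Hmax Hfs Hwit)); split; last exact: cls_countable.
split; first exact: (interp_all _ (TI_interp Hnf Hhat Hmax Hfs Hwit)).
exists (@ttv S (Hset A')); split; first exact: (logical_agree _ _ (TI_logical Hmax Hfs Hwit)).
move=> s As w Hw.
have Hr : Hset A' (ren s) by left; exists s.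
apply: (TI_holds Hnf Hhat Hr).
exact: (proj2 (ren_ev s _ w) Hw).
Qed.
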